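(* Let $A,B\subseteq R_n$ be such that $\{j:\alpha^j\in A\}$ and $\{j:\alpha^j\in B\}$ are unions of $q$-cyclotomic cosets modulo $n$, and let $C_A$, $C_B$ be the cyclic codes of length $n$ over $\mathbb{F}_q$ with complete defining sets $A$, $B$ respectively. Let $d_A^{\perp}$ be the minimum distance of the dual of $C_A$ and $d_B$ the minimum distance of $C_B$, and suppose $d_A^{\perp}>d_B$. Then $\{j:\alpha^j\in AB\}$ is a union of $q$-cyclotomic cosets modulo $n$, and the cyclic code $C_{AB}$ of length $n$ over $\mathbb{F}_q$ with complete defining set $AB$ has $(d_A^{\perp}-d_B+1,\,d_B)$-locality.
   Context: Let $q$ be a prime power and $n$ a positive integer with $\gcd(n,q)=1$. Let $d$ be the multiplicative order of $q$ modulo $n$, $\alpha\in\mathbb{F}_{q^d}$ a primitive $n$-th root of unity, and $R_n=\{\alpha^j:0\le j\le n-1\}$. For $A,B\subseteq R_n$, $AB=\{\beta\gamma:\beta\in A,\gamma\in B\}$. If $Z\subseteq R_n$ is such that $\{j:\alpha^j\in Z\}$ is a union of $q$-cyclotomic cosets modulo $n$, the cyclic code of length $n$ over $\mathbb{F}_q$ with complete defining set $Z$ is the ideal generated by $\prod_{\beta\in Z}(x-\beta)\in\mathbb{F}_q[x]$ in $\mathbb{F}_q[x]/(x^n-1)$, identified with a subspace of $\mathbb{F}_q^n$ via coefficient vectors. Locality: for a linear code $C\subseteq\mathbb{F}^n$ and integers $r\ge1$, $\delta\ge2$, the $i$-th coordinate has $(r,\delta)$-locality if there is $S_i\subseteq\{1,\dots,n\}$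 with $i\in S_i$, $|S_i|\le r+\delta-1$ such that the punctured code $C|_{S_i}$ (restrictions of codewords to $S_i$) has minimum distance at least $\delta$ (the zero code having infinite minimum distance); $C$ has $(r,\delta)$-locality if every coordinate does. *)

(* Defs.v *)
From HB Require Import structures.
From mathcomp Require Import all_boot all_order all_algebra all_field.
Set Implicit Arguments. Unset Strict Implicit. Unset Printing Implicit Defensive.
Import GRing.Theory.
Local Open Scope ring_scope.

(* The q-cyclotomic coset of j modulo n is {j q^k mod n : k}.  A set J of
   residues mod n is a union of q-cyclotomic cosets iff it contains the coset
   of each of its elements. *)
Definition cyc_union (q n : nat) (J : {set 'I_n}) : Prop :=
  forall j : 'I_n, j \in J -> forall (k : nat) (j' : 'I_n),
    (j' : nat) = ((j * q ^ k) %% n)%N -> j' \in J.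

Definition in_Rn (L : fieldType) (n : nat) (alpha : L) (Z : seq L) : Prop :=
  forall x, x \in Z -> exists j : 'I_n, x = alpha ^+ j.

Definition expset (L : fieldType) (n : nat) (alpha : L) (Z : seq L) : {set 'I_n} :=
  [set j : 'I_n | alpha ^+ j \in Z].

Definition prodset (L : fieldType) (A B : seq L) : seq L :=
  [seq x * y | x <- A, y <- B].

(* prod_{beta in Z} (x - beta); as alpha is a primitive n-th root of unity,
   the alpha^j (j < n) are pairwise distinct, so this is the product over the
   elements of Z (when Z is contained in R_n). *)
Definition defpoly (L : fieldType) (n : nat) (alpha : L) (Z : seq L) : {poly L} :=
  \prod_(j : 'I_n | alpha ^+ j \in Z) ('X - (alpha ^+ j)%:P).

Definition rv2poly (F : fieldType) (n : nat) (c : 'rV[F]_n) : {poly F} :=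
  \sum_(i < n) c 0 i *: 'X^i.

(* The cyclic code of length n over F with complete defining set Z: the ideal
   generated by prod_{beta in Z}(x - beta) in F[x]/(x^n - 1), elements being
   represented by their reduced representatives (degree < n), identified with
   coefficient vectors.  The generator polynomial is computed in L[x]; the
   computation f*g mod (x^n-1) is carried out after embedding F[x] in L[x]. *)
Definition cyclic_code (F : finFieldType) (L : fieldExtType F) (n : nat)
  (alpha : L) (Z : seq L) (c : 'rV[F]_n) : Prop :=
  exists f : {poly F},
    map_poly (in_alg L) (rv2poly c)
    = (map_poly (in_alg L) f * defpoly n alpha Z) %% ('X^n - 1).

Definition dual_code (F : fieldType) (n : nat) (C : 'rV[F]_n -> Prop)
  (c : 'rV[F]_n) : Prop :=
  forall x, C x -> \sum_(i < n) c 0 i * x 0 i = 0.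

Definition hdist (F : fieldType) (n : nat) (S : {set 'I_n}) (x y : 'rV[F]_n) : nat :=
  #|[set i in S | x 0 i != y 0 i]|.

(* d is the minimum distance of C (C has two distinct codewords, so d is
   finite) *)
Definition is_min_dist (F : fieldType) (n : nat) (C : 'rV[F]_n -> Prop) (d : nat) : Prop :=
  (exists x y, [/\ C x, C y, x <> y & hdist setT x y = d]) /\
  (forall x y, C x -> C y -> x <> y -> (d <= hdist setT x y)%N).

(* (r, delta)-locality: every coordinate i lies in some S with
   |S| <= r + delta - 1 such that the punctured code C|_S has minimum
   distance >= delta (distinct restrictions to S differ in >= delta
   coordinates of S; vacuous for the zero code). *)
Definition has_locality (F : fieldType) (n : nat) (C : 'rV[F]_n -> Prop)
  (r delta : nat) : Prop :=
  forall i : 'I_n, exists S : {set 'I_n},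
    [/\ i \in S, (#|S| <= r + delta - 1)%N &
        forall x y, C x -> C y -> hdist S x y <> 0%N -> (delta <= hdist S x y)%N].

Arguments cyclic_code {F L} n alpha Z c.

(* Main.v *)
Require Import Defs.
From HB Require Import structures.
From mathcomp Require Import all_boot all_order all_algebra all_field.
From mathcomp Require Import all_fingroup all_solvable.
From mathcomp Require Import ring zify.
Import GRing.Theory.
Local Open Scope ring_scope.

Section Frob.
Variables (F : finFieldType) (L : fieldExtType F).

Lemma frob_fixed (x : L) : x ^+ #|F| = x -> exists a : F, x = a%:A.
Proof.
move=> hx.
have : x \in (1%VS : {vspace L}).
  by rewrite Fermat's_little_theorem dimv1 expn1 hx.
by case/vlineP=> a ->; exists a.
Qed.

Lemma card_pnat : [pchar L].-nat #|F|.
Proof.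
have [p pp pc] := finPcharP F.
have := pprimeChar_pgroup pc.
rewrite /pgroup cardsT => h.
have h' : p.-nat #|F| := h.
have pL : p \in [pchar L] by rewrite pchar_lalg.
by rewrite (eq_pnat _ (pcharf_eq pL)).
Qed.

Definition frob (x : L) := x ^+ #|F|.
Lemma frob_zmod : zmod_morphism frob.
Proof.
  rewrite /frob => x y.
  have [p _ pcharFp] := finPcharP F; rewrite (card_pprimeChar pcharFp).
  elim: (logn _ _) => // n IHn; rewrite expnSr !exprM {}IHn.
  by rewrite -(pchar_lalg L) in pcharFp; rewrite -pFrobenius_autE rmorphB.
Qed.
Lemma frob_monoid : monoid_morphism frob.
Proof. by rewrite /frob; split=> [|x y]; rewrite ?exprMn ?expr1n //. Qed.
HB.instance Definition _ := GRing.isZmodMorphism.Build L L frob frob_zmod.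
HB.instance Definition _ := GRing.isMonoidMorphism.Build L L frob frob_monoid.
End Frob.


Section Over.
Variables (F : finFieldType) (L : fieldExtType F).

Lemma defpoly_over (n d : nat) (alpha : L) (Z : seq L) :
  (0 < n)%N -> (0 < d)%N -> (#|F| ^ d = 1 %[mod n])%N ->
  n.-primitive_root alpha -> cyc_union #|F| (expset n alpha Z) ->
  exists g : {poly F}, defpoly n alpha Z = map_poly (in_alg L) g.
Proof.
move=> n0 d0 qd pr cu.
set q := #|F|.
have an : alpha ^+ n = 1 by apply: prim_expr_order.
pose h (j : 'I_n) : 'I_n := Ordinal (ltn_pmod (j * q) n0).
have hinj : injective h.
  move=> i j /(congr1 val) /= e.
  apply: val_inj => /=.
  rewrite -(modn_small (ltn_ord i)) -(modn_small (ltn_ord j)).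
  have E k : (k * q ^ d = k %[mod n])%N by rewrite -modnMmr qd modnMmr muln1.
  rewrite -(E i) -(E j).
  have -> : (q ^ d = q * q ^ d.-1)%N by rewrite -expnS prednK.
  by rewrite !mulnA -modnMml e modnMml.
have hP j : (alpha ^+ h j \in Z) = (alpha ^+ j \in Z).
  have JE i : (i \in expset n alpha Z) = (alpha ^+ i \in Z) by rewrite inE.
  rewrite -!JE; apply/idP/idP => H.
  - apply: (cu (h j) H d.-1).
    rewrite /= modnMml -mulnA -expnS prednK // -modnMmr qd modnMmr muln1.
    by rewrite modn_small.
  - apply: (cu j H 1%N).
    by rewrite /= expn1.
have fix_G : map_poly (@frob F L) (defpoly n alpha Z) = defpoly n alpha Z.
  rewrite /defpoly rmorph_prod.
  rewrite [RHS](reindex_inj hinj) /=.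
  apply: eq_big => [j|j _]; first by rewrite hP.
  rewrite rmorphB /= map_polyX map_polyC /= /frob -exprM.
  by rewrite -(expr_mod _ an).
set G := defpoly n alpha Z.
pose cf (x : L) : F := odflt 0 [pick a : F | a%:A == x].
have cfE k : (cf G`_k)%:A = G`_k.
  have : frob F L G`_k = G`_k by rewrite -coef_map fix_G.
  case/(@frob_fixed F L) => a ->.
  rewrite /cf; case: pickP => [b /eqP //|/(_ a)]; by rewrite eqxx.
exists (\poly_(k < size G) cf G`_k).
apply/polyP => k; rewrite coef_map coef_poly /=.
case: ltnP => hk; first by rewrite cfE.
by rewrite nth_default // scale0r.
Qed.
End Over.


Section Codes.
Variables (F : finFieldType) (L : fieldExtType F) (n : nat) (alpha : L).
Hypothesis n0 : (0 < n)%N.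
Hypothesis pr : n.-primitive_root alpha.

Definition ev (c : 'rV[F]_n) (x : L) := \sum_(i < n) (c 0 i)%:A * x ^+ i.

Lemma coef_rv2poly (c : 'rV[F]_n) k : (rv2poly c)`_k = \sum_(i < n) c 0 i * (k == i :> nat)%:R.
Proof.
rewrite /rv2poly coef_sum; apply: eq_bigr => i _.
by rewrite coefZ coefXn.
Qed.

Lemma size_rv2poly (c : 'rV[F]_n) : (size (rv2poly c) <= n)%N.
Proof.
apply/leq_sizeP => k hk; rewrite coef_rv2poly big1 // => i _.
by rewrite (gtn_eqF (leq_trans (ltn_ord i) hk)) mulr0.
Qed.

Lemma map_rv2poly (c : 'rV[F]_n) :
  map_poly (in_alg L) (rv2poly c) = \sum_(i < n) (c 0 i)%:A *: 'X^i.
Proof.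
apply/polyP => k; rewrite coef_map coef_rv2poly coef_sum /= scaler_suml.
apply: eq_bigr => i _; rewrite coefZ coefXn.
by case: eqP => _; rewrite ?mulr1 ?mulr0 ?scale0r.
Qed.

Lemma evE (c : 'rV[F]_n) x : (map_poly (in_alg L) (rv2poly c)).[x] = ev c x.
Proof.
rewrite map_rv2poly horner_sum; apply: eq_bigr => i _.
by rewrite hornerZ hornerXn.
Qed.

Lemma an : alpha ^+ n = 1.
Proof. exact: prim_expr_order. Qed.

Lemma alpha_inj (i j : 'I_n) : alpha ^+ i = alpha ^+ j -> i = j.
Proof.
move/eqP; rewrite (eq_prim_root_expr pr) !modn_small //.
by move/eqP/val_inj.
Qed.

Lemma defpoly_dvd (Z : seq L) (p : {poly L}) :
  (forall j : 'I_n, alpha ^+ j \in Z -> root p (alpha ^+ j)) ->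
  defpoly n alpha Z %| p.
Proof.
move=> H.
pose rs := [seq alpha ^+ (val j) | j <- enum (fun j : 'I_n => alpha ^+ j \in Z)].
have -> : defpoly n alpha Z = \prod_(z <- rs) ('X - z%:P).
  by rewrite /defpoly big_map big_enum.
have [||q ->] := @uniq_roots_prod_XsubC _ p rs.
- apply/allP => z /mapP [j]; rewrite mem_enum => hj ->; exact: H.
- rewrite uniq_rootsE map_inj_in_uniq ?enum_uniq //.
  by move=> i j _ _; apply: alpha_inj.
- exact: dvdp_mull.
Qed.

Lemma M_map : ('X^n - 1 : {poly L}) = map_poly (in_alg L) ('X^n - 1).
Proof. by rewrite rmorphB /= map_polyXn rmorph1. Qed.

Lemma codeA (Z : seq L) (c : 'rV[F]_n) beta : in_Rn n alpha Z -> cyclic_code n alpha Z c ->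
  beta \in Z -> ev c beta = 0.
Proof.
move=> hR [f hf] hb.
have [j bj] := hR _ hb.
have bn : beta ^+ n = 1 by rewrite bj -exprM mulnC exprM an expr1n.
rewrite -evE hf.
have := divp_eq (map_poly (in_alg L) f * defpoly n alpha Z) ('X^n - 1).
move/(congr1 (fun p => p.[beta])).
rewrite !hornerE bn subrr mulr0 add0r => <-.
rewrite /defpoly horner_prod (bigD1 j) /=; last by rewrite -bj.
by rewrite !hornerE -bj subrr /= mulr0 mul0r.
Qed.

Lemma codeB (Z : seq L) (g : {poly F}) (w : 'rV[F]_n) :
  defpoly n alpha Z = map_poly (in_alg L) g ->
  (forall j : 'I_n, alpha ^+ j \in Z -> ev w (alpha ^+ j) = 0) ->
  cyclic_code n alpha Z w.
Proof.
move=> hg H.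
have dv : g %| rv2poly w.
  rewrite -(dvdp_map (in_alg L)) -hg; apply: defpoly_dvd => j hj.
  by rewrite /root evE H.
exists (rv2poly w %/ g).
rewrite hg -rmorphM divpK // modp_small //.
rewrite size_map_poly M_map size_map_poly size_XnsubC //.
exact: leq_ltn_trans (size_rv2poly w) _.
Qed.

End Codes.
Arguments ev {F L n} c x.


Section Fourier.
Variables (F : finFieldType) (L : fieldExtType F) (n : nat) (alpha : L).
Hypothesis n0 : (0 < n)%N.
Hypothesis pr : n.-primitive_root alpha.

Lemma geom0 (z : L) : z ^+ n = 1 -> z != 1 -> \sum_(i < n) z ^+ i = 0.
Proof.
move=> zn z1; have := subrX1 z n; rewrite zn subrr => /esym /eqP.
by rewrite mulf_eq0 subr_eq0 (negbTE z1) /= => /eqP.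
Qed.

Lemma alpha_neq0 : alpha != 0.
Proof. by rewrite (prim_root_eq0 pr) -lt0n n0. Qed.

Definition uhat (u : 'rV[F]_n) (z : L) := \sum_(j < n) (u 0 j)%:A * z ^+ j.

Lemma inversion (u : 'rV[F]_n) (i : 'I_n) :
  \sum_(m < n) uhat u (alpha ^+ m) * ((alpha ^+ m)^-1) ^+ i = n%:R * (u 0 i)%:A.
Proof.
have an := prim_expr_order pr.
rewrite /uhat.
under eq_bigr do rewrite mulr_suml.
rewrite exchange_big /=.
have inner (j : 'I_n) : \sum_(m < n) (u 0 j)%:A * (alpha ^+ m) ^+ j * ((alpha ^+ m)^-1) ^+ i
   = (u 0 j)%:A * \sum_(m < n) (alpha ^+ j * (alpha ^+ i)^-1) ^+ m.
  rewrite mulr_sumr; apply: eq_bigr => m _.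
  rewrite -mulrA exprMn; congr (_ * (_ * _)); first exact: exprAC.
  by rewrite !exprVn exprAC.
under eq_bigr do rewrite inner.
rewrite (bigD1 i) //= [X in _ + X]big1 ?addr0.
  rewrite mulfV ?expf_neq0 ?alpha_neq0//.
  under eq_bigr do rewrite expr1n.
  by rewrite sumr_const card_ord mulrC mulr_natl.
move=> j ji; rewrite geom0 ?mulr0 //.
  by rewrite exprMn -exprM mulnC exprM an expr1n exprVn exprAC an expr1n invr1 mulr1.
have ai : alpha ^+ i != 0 by rewrite expf_neq0 ?alpha_neq0.
apply: contra ji => /eqP e; apply/eqP/(@alpha_inj F L n alpha pr).
by rewrite -[alpha ^+ j](divfK ai) e mul1r.
Qed.


Definition hs (s : 'I_n) (j : 'I_n) : 'I_n := Ordinal (ltn_pmod (j + s) n0).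
Definition hs' (s : 'I_n) (j : 'I_n) : 'I_n := Ordinal (ltn_pmod (j + (n - s)) n0).

Lemma hsK s : cancel (hs s) (hs' s).
Proof.
move=> j; apply: val_inj => /=.
by rewrite modnDml -addnA subnKC ?(ltnW (ltn_ord s)) // modnDr modn_small.
Qed.

Lemma hs'K s : cancel (hs' s) (hs s).
Proof.
move=> j; apply: val_inj => /=.
by rewrite modnDml -addnA subnK ?(ltnW (ltn_ord s)) // modnDr modn_small.
Qed.

Definition shiftv (u : 'rV[F]_n) (s : 'I_n) : 'rV[F]_n := \row_i u 0 (hs' s i).

Lemma uhat_shift u s z : z ^+ n = 1 -> uhat (shiftv u s) z = z ^+ s * uhat u z.
Proof.
move=> zn; rewrite /uhat (reindex (hs s)); last first.
  by exists (hs' s) => j _; [apply: hsK | apply: hs'K].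
rewrite mulr_sumr; apply: eq_bigr => j _.
rewrite mxE hsK /= (expr_mod _ zn) exprD.
by rewrite mulrA mulrC.
Qed.


Lemma algMul (a b : F) : (a * b)%:A = a%:A * b%:A :> L.
Proof. by rewrite -scalerA mulr_algl. Qed.

Lemma in_Rn_prod (A B : seq L) :
  in_Rn n alpha A -> in_Rn n alpha B -> in_Rn n alpha (prodset A B).
Proof.
move=> hA hB x /allpairsP [[a b] [/= ha hb ->]].
have [i ->] := hA _ ha; have [j ->] := hB _ hb.
exists (Ordinal (ltn_pmod (i + j) n0)).
by rewrite /= (expr_mod _ (prim_expr_order pr)) exprD.
Qed.

Lemma core (A B : seq L) (u c : 'rV[F]_n) gamma :
  (forall m : nat, (alpha ^+ m)^-1 \notin A -> uhat u (alpha ^+ m) = 0) ->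
  (forall x, x \in prodset A B -> ev c x = 0) ->
  gamma \in B -> ev (\row_i (u 0 i * c 0 i)) gamma = 0.
Proof.
move=> hu hc hg.
have nz : (n%:R : L) != 0 := prim_root_natf_neq0 pr.
apply: (mulfI nz); rewrite mulr0 /ev mulr_sumr.
transitivity (\sum_(i<n) (c 0 i)%:A * gamma^+i * (n%:R * (u 0 i)%:A)).
  by apply: eq_bigr => i _; rewrite mxE algMul; ring.
under eq_bigr do rewrite -inversion mulr_sumr.
rewrite exchange_big /= big1 // => m _.
transitivity (uhat u (alpha ^+ m) * ev c ((alpha ^+ m)^-1 * gamma)).
  rewrite /ev mulr_sumr; apply: eq_bigr => i _; rewrite exprMn; ring.
case: (boolP ((alpha ^+ m)^-1 \in A)) => h.
  rewrite hc ?mulr0 //; apply/allpairsP; by exists ((alpha ^+ m)^-1, gamma).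
by rewrite hu // mul0r.
Qed.

End Fourier.
Arguments uhat {F L n} u z.


Lemma coef_sumX (R : nzRingType) n (E : 'I_n -> R) (i : 'I_n) :
  (\sum_(k < n) E k *: 'X^k)`_i = E i.
Proof.
rewrite coef_sum (bigD1 i) //= coefZ coefXn eqxx mulr1 big1 ?addr0 //.
by move=> k ki; rewrite coefZ coefXn eq_sym (inj_eq val_inj) (negbTE ki) mulr0.
Qed.

Lemma coef_sumX_ge (R : nzRingType) n (E : 'I_n -> R) (i : nat) : (n <= i)%N ->
  (\sum_(k < n) E k *: 'X^k)`_i = 0.
Proof.
move=> hi; rewrite coef_sum big1 // => k _.
by rewrite coefZ coefXn (gtn_eqF (leq_trans (ltn_ord k) hi)) mulr0.
Qed.

Lemma size_sumX (R : nzRingType) n (E : 'I_n -> R) :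
  (size (\sum_(k < n) E k *: 'X^k)%R <= n)%N.
Proof. by apply/leq_sizeP => j hj; rewrite coef_sumX_ge. Qed.

Section Dual.
Variables (F : finFieldType) (L : fieldExtType F) (n : nat) (alpha : L).
Hypothesis n0 : (0 < n)%N.
Hypothesis pr : n.-primitive_root alpha.

Lemma rv2poly_row (p : {poly F}) : (size p <= n)%N -> rv2poly (\row_(i < n) p`_i) = p.
Proof.
move=> hp; apply/polyP => k.
case: (ltnP k n) => hk.
  have -> : k = Ordinal hk by [].
  by rewrite coef_sumX mxE.
by rewrite coef_sumX_ge // nth_default // (leq_trans hp hk).
Qed.

Lemma dualP (A : seq L) (g : {poly F}) (u : 'rV[F]_n) :
  defpoly n alpha A = map_poly (in_alg L) g ->
  dual_code (cyclic_code n alpha A) u ->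
  forall m : nat, (alpha ^+ m)^-1 \notin A -> uhat u (alpha ^+ m) = 0.
Proof.
move=> hg hu m hm.
have an := prim_expr_order pr.
set z := alpha ^+ m.
have zn : z ^+ n = 1 by rewrite /z -exprM mulnC exprM an expr1n.
have z0 : z != 0 by rewrite expf_neq0 // (@alpha_neq0 F L n alpha n0 pr).
pose vp : {poly L} := \sum_(i < n) z ^+ i *: 'X^i.
have dv : defpoly n alpha A %| vp.
  apply: defpoly_dvd => // j hj; rewrite /root horner_sum.
  under eq_bigr do rewrite hornerZ hornerXn -exprMn.
  apply/eqP; apply: geom0.
    by rewrite exprMn zn -exprM mulnC exprM an expr1n mul1r.
  apply: contraNneq hm => e.
  have <- : alpha ^+ j = z^-1 by rewrite -(mulKf z0 (alpha ^+ j)) e mulr1.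
  exact: hj.
have [h hh] := dvdpP _ _ dv.
pose b := vbasis (fullv : {vspace L}).
pose f (t : 'I_(\dim (fullv : {vspace L}))) : {poly F} :=
  \poly_(k < size h) coord b t h`_k.
have hdec : h = \sum_(t < \dim (fullv : {vspace L})) b`_t *: map_poly (in_alg L) (f t).
  apply/polyP => k; rewrite coef_sum.
  under eq_bigr do rewrite coefZ coef_map coef_poly /=.
  case: ltnP => hk.
    rewrite {1}(coord_vbasis (memvf h`_k)); apply: eq_bigr => t _.
    by rewrite mulrC mulr_algl.
  by rewrite nth_default // big1 // => t _; rewrite scale0r mulr0.
pose M : {poly F} := 'X^n - 1.
have Mne : M != 0 by rewrite -size_poly_eq0 size_XnsubC.
have szM (p : {poly F}) : (size (p %% M)%R <= n)%N.
  by have := ltn_modp p M; rewrite Mne size_XnsubC.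
pose ct t : 'rV[F]_n := \row_i ((f t * g) %% M)`_i.
have ctC t : cyclic_code n alpha A (ct t).
  exists (f t); rewrite rv2poly_row // hg -rmorphM (@M_map F L n) -map_modp.
  done.
have ctD t : \sum_(i < n) u 0 i * ct t 0 i = 0 := hu _ (ctC t).
have szv : (size vp <= n)%N by apply: size_sumX.
have vpE : vp = \sum_(t < \dim (fullv : {vspace L})) b`_t *: map_poly (in_alg L) ((f t * g) %% M).
  have szML : (size vp < size ('X^n - 1 : {poly L})%R)%N by rewrite size_XnsubC.
  rewrite -[vp](modp_small szML) hh hdec mulr_suml.
  rewrite (big_morph _ (modpD _) (mod0p _)); apply: eq_bigr => t _.
  by rewrite -scalerAl modpZl hg -rmorphM (@M_map F L n) -map_modp.
rewrite /uhat.
transitivity (\sum_(i < n) (u 0 i)%:A * vp`_i).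
  by apply: eq_bigr => i _; rewrite coef_sumX.
rewrite vpE.
under eq_bigr do rewrite coef_sum mulr_sumr.
rewrite exchange_big big1 // => t _ /=.
transitivity (b`_t * (\sum_(i < n) u 0 i * ct t 0 i)%:A); last by rewrite ctD scale0r mulr0.
rewrite scaler_suml mulr_sumr; apply: eq_bigr => i _.
by rewrite coefZ coef_map mxE /= algMul; ring.
Qed.

End Dual.


Lemma evB (F : finFieldType) (L : fieldExtType F) n (x y : 'rV[F]_n) (z : L) :
  ev (x - y) z = ev x z - ev y z.
Proof.
rewrite /ev -sumrB; apply: eq_bigr => i _.
by rewrite !mxE scalerBl mulrBl.
Qed.

Theorem corollary3p5 (F : finFieldType) (L : fieldExtType F) (n d : nat)
  (alpha : L) (A B : seq L) (dAperp dB : nat) :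
  (0 < n)%N -> coprime n #|F| ->
  (* d is the multiplicative order of q = #|F| modulo n, and L = F_{q^d} *)
  (0 < d)%N -> (#|F| ^ d = 1 %[mod n])%N ->
  (forall k : nat, (0 < k < d)%N -> (#|F| ^ k != 1 %[mod n])%N) ->
  (\dim {: L} = d)%N ->
  n.-primitive_root alpha ->
  in_Rn n alpha A -> in_Rn n alpha B ->
  cyc_union #|F| (expset n alpha A) -> cyc_union #|F| (expset n alpha B) ->
  is_min_dist (dual_code (cyclic_code n alpha A)) dAperp ->
  is_min_dist (cyclic_code n alpha B) dB ->
  (dB < dAperp)%N ->
  cyc_union #|F| (expset n alpha (prodset A B)) /\
  has_locality (cyclic_code n alpha (prodset A B)) (dAperp - dB + 1) dB.
Proof.
move=> n0 _ d0 qd _ _ pr hA hB cuA cuB [[x [y [dx dy xy hxy]]] _] [_ mdB] dlt.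
have an := prim_expr_order pr.
split.
  move=> j; rewrite inE => /allpairsP [[a b] [/= ha hb e]] k j' hj'.
  rewrite inE.
  have [ia ea] := hA _ ha; have [ib eb] := hB _ hb.
  have hia : alpha ^+ ((ia * #|F| ^ k) %% n) \in A.
    have := cuA ia _ k (Ordinal (ltn_pmod (ia * #|F| ^ k) n0)) erefl.
    by rewrite !inE -ea => /(_ ha).
  have hib : alpha ^+ ((ib * #|F| ^ k) %% n) \in B.
    have := cuB ib _ k (Ordinal (ltn_pmod (ib * #|F| ^ k) n0)) erefl.
    by rewrite !inE -eb => /(_ hb).
  apply/allpairsP; exists (alpha ^+ ((ia * #|F| ^ k) %% n), alpha ^+ ((ib * #|F| ^ k) %% n)).
  split => //=.
  by rewrite hj' !(expr_mod _ an) !exprM -exprMn -ea -eb -e.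
have [gA hgA] := @defpoly_over F L n d alpha A n0 d0 qd pr cuA.
have [gB hgB] := @defpoly_over F L n d alpha B n0 d0 qd pr cuB.
set u := x - y.
have hu : dual_code (cyclic_code n alpha A) u.
  move=> z hz; rewrite /u.
  under eq_bigr do rewrite !mxE mulrBl.
  by rewrite sumrB dx // dy // subrr.
have Pu := @dualP F L n alpha n0 pr A gA u hgA hu.
have [j0 hj0] : exists j0, u 0 j0 != 0.
  case: (pickP (fun j => u 0 j != 0)) => [j0 h|none]; first by exists j0.
  exfalso; apply: xy; apply/matrixP => i j; rewrite ord1.
  by have := none j; rewrite /u !mxE subr_eq0 => /negbFE/eqP.
have B0 : cyclic_code n alpha B 0.
  exists 0; rewrite /rv2poly big1 => [|j _]; last by rewrite mxE scale0r.
  by rewrite !rmorph0 mul0r mod0p.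
have codeAB : forall c, cyclic_code n alpha (prodset A B) c ->
    forall z, z \in prodset A B -> ev c z = 0.
  by move=> c hc z hz; apply: (@codeA F L n alpha pr _ _ _ _ hc hz); apply: (@in_Rn_prod F L n alpha n0 pr).
move=> i.
pose s : 'I_n := Ordinal (ltn_pmod (i + (n - j0)) n0).
have hsj0 : hs n n0 s j0 = i.
  apply: val_inj => /=.
  rewrite modnDmr addnCA subnKC ?(ltnW (ltn_ord j0)) //.
  by rewrite modnDr modn_small.
pose u' := shiftv F n n0 u s.
exists [set j | u' 0 j != 0]; split.
- by rewrite inE /u' mxE -hsj0 (hsK n n0).
- have -> : #|[set j | u' 0 j != 0]| = dAperp.
    rewrite -hxy /hdist.
    have -> : [set j | u' 0 j != 0] = hs' n n0 s @^-1: [set j | u 0 j != 0].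
      by apply/setP => j; rewrite !inE /u' mxE.
    rewrite card_preimset; last exact: (can_inj (hs'K n n0 s)).
    by apply: eq_card => j; rewrite !inE /u !mxE subr_eq0.
  lia.
- move=> x1 y1 hx1 hy1 hne.
  set c := x1 - y1.
  pose w := \row_(j < n) (u' 0 j * c 0 j).
  have Pu' : forall m : nat, (alpha ^+ m)^-1 \notin A -> uhat u' (alpha ^+ m) = 0.
    move=> m hm; rewrite uhat_shift ?Pu ?mulr0 //.
    by rewrite -exprM mulnC exprM an expr1n.
  have hc : forall z, z \in prodset A B -> ev c z = 0.
    by move=> z hz; rewrite /c evB !codeAB // subrr.
  have wB : cyclic_code n alpha B w.
    apply: (@codeB F L n alpha n0 pr B gB w hgB) => j hj.
    exact: (@core F L n alpha n0 pr A B u' c _ Pu' hc hj).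
  have hd : hdist [set j | u' 0 j != 0] x1 y1 = hdist setT w 0.
    rewrite /hdist; apply: eq_card => j.
    by rewrite !inE !mxE mulf_eq0 negb_or /= [x1 0 j - _ == 0]subr_eq0.
  rewrite hd; apply: mdB => //.
  move=> w0; apply: hne; rewrite hd w0 /hdist.
  apply/eqP; rewrite cards_eq0; apply/eqP/setP => j.
  by rewrite !inE eqxx.
Qed.
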